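(* Let $g$ be a balanced $n$-variable Boolean function, $b\in\mathbb{F}_2$, let $g_b$ be the $(n+1)$-variable function $$g_b(X_{n+1},X_n,\ldots,X_1)=(1\oplus X_{n+1})\,g(X_n,\ldots,X_1)\oplus X_{n+1}\bigl(b\oplus g(1\oplus X_n,\ldots,1\oplus X_1)\bigr),$$ and let $G_b=g_b\diamond g$ (an $n(n+1)$-variable function). Then $$\frac{H_\infty(G_b)}{\mathrm{Inf}(G_b)}=\frac{\min_{i\in\{0,\ldots,n+1\},\ a_i>0}\bigl(-\log a_i+i\,H_\infty(g)\bigr)}{\mathrm{Inf}(g)\bigl(\mathrm{Inf}(g)+\epsilon_b(g)\bigr)},$$ where $a_i=\max_{\mathbf{w}\in\mathbb{F}_2^{n+1},\ \mathrm{wt}(\mathbf{w})=i}W_{g_b}^2(\mathbf{w})$ and $\epsilon_b(g)=\sum_{\bm{\alpha}\in\mathbb{F}_2^n,\ \mathrm{wt}(\bm{\alpha})\not\equiv b\pmod 2}W_g^2(\bm{\alpha})$. Moreover, if there is an integer $t$ with $0\le t<n$ and $t\equiv b\pmod 2$ such that $g$ is plateaued and $t$-resilient but not $(t+1)$-resilient, then $$\frac{H_\infty(G_b)}{\mathrm{Inf}(G_b)}=\frac{H_\infty(g)}{\mathrm{Inf}(g)}\cdot\frac{t+3}{\mathrm{Inf}(g)+\epsilon_b(g)}.$$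
   Context: Boolean functions are maps $\mathbb{F}_2^n\to\mathbb{F}_2$; balanced means value $1$ on exactly $2^{n-1}$ inputs. Walsh transform: $W_f(\bm{\alpha})=2^{-n}\sum_{\mathbf{x}}(-1)^{f(\mathbf{x})\oplus\langle\mathbf{x},\bm{\alpha}\rangle}$, $\langle\mathbf{x},\bm{\alpha}\rangle=\bigoplus_ix_i\alpha_i$. Logarithms base 2. Min-entropy: $H_\infty(f)=\min_{\bm{\alpha}:W_f^2(\bm{\alpha})\ne0}\log(1/W_f^2(\bm{\alpha}))$. Influence: $\mathrm{Inf}(f)=\sum_{i=1}^n\Pr_{\mathbf{x}}[f(\mathbf{x})\ne f(\mathbf{x}\oplus\mathbf{e}_i)]=\sum_{\bm{\alpha}}\mathrm{wt}(\bm{\alpha})W_f^2(\bm{\alpha})$. Disjoint composition: for $f$ on $k$ variables and $h$ on $l$ variables, $(f\diamond h)(\mathbf{x})=f(h(\mathbf{x}^{(1)}),\ldots,h(\mathbf{x}^{(k)}))$ with $\mathbf{x}^{(i)}=(x_{(i-1)l+1},\ldots,x_{il})$. A function $f$ is $t$-resilient if $W_f(\bm{\alpha})=0$ for all $\bm{\alpha}$ with $\mathrm{wt}(\bm{\alpha})\le t$; $f$ is plateaued if there is $c$ such that $W_f(\bm{\alpha})\in\{0,c,-c\}$ for all $\bm{\alpha}$. *)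

(* Defs.v *)
From HB Require Import structures.
From mathcomp Require Import all_boot all_order all_algebra.
From mathcomp Require Import all_classical all_reals all_analysis.
Set Implicit Arguments. Unset Strict Implicit. Unset Printing Implicit Defensive.
Import Order.TTheory GRing.Theory Num.Theory.
Local Open Scope ring_scope.

Definition bvec (n : nat) := {ffun 'I_n -> bool}.

Definition wt n (a : bvec n) : nat := #|[set i | a i]|.

Definition dotb n (x a : bvec n) : bool := odd (\sum_(i < n) (x i && a i)).

Section Defs.
Variable R : realType.

Definition log2 (x : R) : R := ln x / ln 2.

(* balanced: exactly 2^(n-1) ones, i.e. 2 * #ones = 2^n *)
Definition balanced n (f : bvec n -> bool) : Prop :=
  (#|[set x | f x]| * 2 = 2 ^ n)%N.

Definition walsh n (f : bvec n -> bool) (a : bvec n) : R :=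
  (2 ^+ n)^-1 * \sum_(x : bvec n) (-1) ^+ (f x (+) dotb x a).

Definition Hmin n (f : bvec n -> bool) : R :=
  fine (\big[Order.min/+oo%E]_(a : bvec n | walsh f a ^+ 2 != 0)
          (log2 (walsh f a ^+ 2)^-1)%:E).

Definition flip n (x : bvec n) (i : 'I_n) : bvec n :=
  [ffun j => if j == i then ~~ x j else x j].

Definition Inf n (f : bvec n -> bool) : R :=
  \sum_(i < n) (#|[set x : bvec n | f x != f (flip x i)]|%:R / (2 ^+ n)).

Definition resilient n (f : bvec n -> bool) (t : nat) : Prop :=
  forall a : bvec n, (wt a <= t)%N -> walsh f a = 0.

Definition plateaued n (f : bvec n -> bool) : Prop :=
  exists c : R, forall a : bvec n,
    walsh f a = 0 \/ walsh f a = c \/ walsh f a = - c.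

Definition epsb n (g : bvec n -> bool) (b : bool) : R :=
  \sum_(a : bvec n | odd (wt a) != b) walsh g a ^+ 2.

End Defs.

(* block indexing for disjoint composition: x^(i)_j = x_{i*l + j} *)
Lemma blk_lt k l (i : 'I_k) (j : 'I_l) : (i * l + j < k * l)%N.
Proof.
have Hj := ltn_ord j; have Hi := ltn_ord i.
apply: (@leq_trans (i * l + l)); first by rewrite ltn_add2l.
by rewrite -mulSnr leq_mul2r Hi orbT.
Qed.

Definition blk k l (i : 'I_k) (j : 'I_l) : 'I_(k * l) := Ordinal (blk_lt i j).

Definition bool_dcomp k l (f : bvec k -> bool) (h : bvec l -> bool)
  (x : bvec (k * l)) : bool :=
  f [ffun i : 'I_k => h [ffun j : 'I_l => x (blk i j)]].

(* g_b on n+1 variables: coordinate ord_max is X_{n+1}, coordinates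
   0..n-1 are X_1..X_n *)
Definition gb n (g : bvec n -> bool) (b : bool) (w : bvec n.+1) : bool :=
  let X := w ord_max in
  let y : bvec n := [ffun i : 'I_n => w (widen_ord (leqnSn n) i)] in
  let yc : bvec n := [ffun i : 'I_n => ~~ y i] in
  ((~~ X) && g y) (+) (X && (b (+) g yc)).

Definition acoef (R : realType) n (g : bvec n -> bool) (b : bool) (i : nat) : R :=
  \big[Num.max/0]_(w : bvec n.+1 | wt w == i) walsh R (gb g b) w ^+ 2.

(* Main.v *)
Require Import Defs.
From HB Require Import structures.
From mathcomp Require Import all_boot all_order all_algebra.
From mathcomp Require Import all_classical all_reals all_analysis.
From mathcomp Require Import ring lra.
Import Order.TTheory GRing.Theory Num.Theory.
Local Open Scope ring_scope.
Set Implicit Arguments. Unset Strict Implicit.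


Definition bxor n (x y : bvec n) : bvec n := [ffun i => x i (+) y i].
Definition bz n : bvec n := [ffun _ => false].

Definition chi (R : realType) n (x a : bvec n) : R := (-1) ^+ dotb x a.

Lemma chiE (R : realType) n (x a : bvec n) :
  chi R x a = \prod_i (-1) ^+ (x i && a i).
Proof.
rewrite /chi /dotb signr_odd.
by rewrite (big_morph (fun m : nat => (-1 : R) ^+ m) (@exprD _ _) (expr0 _)).
Qed.

Lemma chi_xor (R : realType) n (x y a : bvec n) :
  chi R (bxor x y) a = chi R x a * chi R y a.
Proof.
rewrite !chiE -big_split /=; apply: eq_bigr => i _; rewrite ffunE.
by case: (x i); case: (y i); case: (a i) => /=; rewrite ?expr0 ?expr1 ?mulr1 ?mul1r ?mulrNN ?mulr1.
Qed.

Lemma chiC (R : realType) n (x a : bvec n) : chi R x a = chi R a x.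
Proof. by rewrite !chiE; apply: eq_bigr => i _; rewrite andbC. Qed.

Lemma sum_chi (R : realType) n (a : bvec n) :
  \sum_x chi R x a = if a == bz n then 2 ^+ n else 0.
Proof.
under eq_bigr do rewrite chiE.
rewrite -(bigA_distr_bigA (fun i (c : bool) => (-1 : R) ^+ (c && a i))).
under eq_bigr do rewrite big_bool /=.
case: eqP => [->|/eqP].
  under eq_bigr do rewrite ffunE /= expr0.
  by rewrite prodr_const card_ord.
move=> ne; have [i ai] : exists i, a i.
  apply/existsP; apply: contraNT ne; rewrite negb_exists => /forallP H.
  by apply/eqP/ffunP => i; rewrite ffunE; apply/negbTE.
by rewrite (bigD1 i) //= ai /= expr1 expr0 addNr mul0r.
Qed.

Lemma bxor_eq0 n (x y : bvec n) : (bxor x y == bz n) = (x == y).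
Proof.
apply/eqP/eqP => [H|->]; apply/ffunP => i.
  by have := congr1 (fun f : bvec n => f i) H; rewrite !ffunE; case: (x i); case: (y i).
by rewrite !ffunE addbb.
Qed.

Lemma bxorK n (x y : bvec n) : bxor (bxor x y) y = x.
Proof. by apply/ffunP => i; rewrite !ffunE -addbA addbb addbF. Qed.

Lemma bxorC n (x y : bvec n) : bxor x y = bxor y x.
Proof. by apply/ffunP => i; rewrite !ffunE addbC. Qed.


Lemma walshE (R : realType) n (f : bvec n -> bool) a :
  walsh R f a = (2 ^+ n)^-1 * \sum_x (-1) ^+ f x * chi R x a.
Proof. by rewrite /walsh; congr (_ * _); apply: eq_bigr => x _; rewrite signr_addb. Qed.

Lemma two_exp_neq0 (R : realType) n : (2 ^+ n : R) != 0.
Proof. by rewrite expf_neq0 // pnatr_eq0. Qed.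

Lemma sum_chi_xor (R : realType) n (y x : bvec n) :
  \sum_a chi R y a * chi R x a = if y == x then 2 ^+ n else 0.
Proof.
under eq_bigr do rewrite -chi_xor chiC.
by rewrite sum_chi bxor_eq0.
Qed.

Lemma walsh_inv (R : realType) n (f : bvec n -> bool) x :
  \sum_a walsh R f a * chi R x a = (-1) ^+ f x.
Proof.
under eq_bigr do rewrite walshE big_distrr mulr_suml.
rewrite exchange_big /=.
under eq_bigr do (under eq_bigr do rewrite -!mulrA; rewrite -!big_distrr /= sum_chi_xor).
rewrite (bigD1 x) //= eqxx big1 ?addr0; last first.
  by move=> y /negbTE ->; rewrite !mulr0.
by rewrite mulrC -mulrA mulrV ?mulr1 // unitfE two_exp_neq0.
Qed.

Lemma walsh_corr (R : realType) n (f : bvec n -> bool) v :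
  \sum_a walsh R f a ^+ 2 * chi R v a =
  (2 ^+ n)^-1 * \sum_x (-1) ^+ f x * (-1) ^+ f (bxor x v).
Proof.
transitivity (\sum_a (2 ^+ n)^-1 * \sum_x (-1) ^+ f x * (walsh R f a * chi R (bxor x v) a)).
  apply: eq_bigr => a _; rewrite expr2 {1}walshE; set w := walsh R f a; clearbody w.
  rewrite -!mulrA; congr (_ * _); rewrite mulr_suml.
  by apply: eq_bigr => x _; rewrite chi_xor; ring.
rewrite -big_distrr /= exchange_big /=; congr (_ * _).
by apply: eq_bigr => x _; rewrite -big_distrr /= walsh_inv.
Qed.

Lemma chi_bz (R : realType) n (a : bvec n) : chi R (bz n) a = 1.
Proof. by rewrite chiE big1 // => i _; rewrite ffunE. Qed.

Lemma bxor_bz n (x : bvec n) : bxor x (bz n) = x.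
Proof. by apply/ffunP => i; rewrite !ffunE addbF. Qed.

Lemma parseval (R : realType) n (f : bvec n -> bool) :
  \sum_a walsh R f a ^+ 2 = 1.
Proof.
have := walsh_corr R f (bz n).
under eq_bigr do rewrite chi_bz mulr1.
move=> ->; under eq_bigr do rewrite bxor_bz -expr2 sqrr_sign.
by rewrite sumr_const card_ffun card_bool card_ord -natrX mulVf // pnatr_eq0 expn_eq0.
Qed.

Lemma sum_sign_bal (R : realType) n (f : bvec n -> bool) :
  balanced f -> \sum_x (-1) ^+ f x = 0 :> R.
Proof.
rewrite /balanced => bal.
have -> : \sum_x (-1) ^+ f x = \sum_x (1 - 2 * (f x)%:R) :> R.
  by apply: eq_bigr => x _; case: (f x); rewrite /= ?expr1 ?expr0; ring.
rewrite sumrB sumr_const card_ffun card_bool card_ord -big_distrr /=.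
rewrite -natr_sum.
have -> : (\sum_x (f x : nat))%N = #|[set x | f x]|.
  by rewrite -sum1_card [in RHS]big_mkcond /=; apply: eq_bigr => x _; rewrite inE; case: (f x).
by rewrite -natrM mulnC bal natrX subrr.
Qed.

Lemma walsh_bz (R : realType) n (f : bvec n -> bool) :
  balanced f -> walsh R f (bz n) = 0.
Proof.
move=> bal; rewrite walshE; under eq_bigr do rewrite chiC chi_bz mulr1.
by rewrite sum_sign_bal // mulr0.
Qed.

Lemma wtE n (a : bvec n) : wt a = (\sum_i (a i : nat))%N.
Proof.
rewrite /wt -sum1_card big_mkcond /=; apply: eq_bigr => i _; rewrite inE.
by case: (a i).
Qed.

Definition e1 n (i : 'I_n) : bvec n := [ffun j => j == i].

Lemma flipE n (x : bvec n) i : flip x i = bxor x (e1 i).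
Proof. by apply/ffunP => j; rewrite !ffunE; case: eqP => _; rewrite ?addbT ?addbF. Qed.

Lemma chi_e1 (R : realType) n (i : 'I_n) (a : bvec n) :
  chi R (e1 i) a = (-1) ^+ a i.
Proof.
rewrite chiE (bigD1 i) //= big1 ?mulr1; first by rewrite ffunE eqxx.
by move=> j /negbTE ji; rewrite ffunE ji.
Qed.

Lemma Inf_walsh (R : realType) n (f : bvec n -> bool) :
  Inf R f = \sum_a (wt a)%:R * walsh R f a ^+ 2.
Proof.
rewrite /Inf.
transitivity (\sum_i \sum_(a : bvec n) (a i : nat)%:R * walsh R f a ^+ 2).
  apply: eq_bigr => i _.
  have -> : #|[set x : bvec n | f x != f (flip x i)]|%:R
       = \sum_x (1 - (-1) ^+ f x * (-1) ^+ f (bxor x (e1 i))) / 2 :> R.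
    rewrite -sum1_card big_mkcond /= natr_sum; apply: eq_bigr => x _.
    rewrite inE flipE; case: (f x); case: (f (bxor x (e1 i))) => /=;
      by rewrite ?expr0 ?expr1; field.
  have E : \sum_(a : bvec n) (a i : nat)%:R * walsh R f a ^+ 2
       = (\sum_a walsh R f a ^+ 2 - \sum_a walsh R f a ^+ 2 * chi R (e1 i) a) / 2.
    rewrite -sumrB mulr_suml; apply: eq_bigr => a _.
    by rewrite chi_e1; case: (a i); rewrite /= ?expr0 ?expr1; field.
  rewrite E parseval walsh_corr -mulr_suml sumrB sumr_const card_ffun card_bool card_ord.
  have := two_exp_neq0 R n; rewrite natrX => H2.
  by field.
by rewrite exchange_big /=; apply: eq_bigr => a _; rewrite -mulr_suml -natr_sum wtE.
Qed.


Definition ext n (y : bvec n) (c : bool) : bvec n.+1 :=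
  [ffun j : 'I_n.+1 => match (insub (val j) : option 'I_n) with Some i => y i | None => c end].
Definition restr n (x : bvec n.+1) : bvec n := [ffun i => x (widen_ord (leqnSn n) i)].

Lemma ext_widen n (y : bvec n) c i : ext y c (widen_ord (leqnSn n) i) = y i.
Proof.
rewrite ffunE; case: insubP => [j _ /= ji|]; last by rewrite /= ltn_ord.
by congr (y _); apply: val_inj.
Qed.

Lemma ext_max n (y : bvec n) c : ext y c ord_max = c.
Proof. by rewrite ffunE; case: insubP => [j /=|//]; rewrite ltnn. Qed.

Lemma restr_ext n (y : bvec n) c : restr (ext y c) = y.
Proof. by apply/ffunP => i; rewrite ffunE ext_widen. Qed.

Lemma ext_restr n (x : bvec n.+1) : ext (restr x) (x ord_max) = x.
Proof.
apply/ffunP => j; rewrite ffunE; case: insubP => [i _ ij|].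
  by rewrite ffunE; congr (x _); apply: val_inj.
rewrite -leqNgt => jn; congr (x _); apply: val_inj => /=.
by apply/eqP; rewrite eqn_leq jn -ltnS ltn_ord.
Qed.

Lemma sum_ext (R : realType) n (F : bvec n.+1 -> R) :
  \sum_x F x = \sum_(c : bool) \sum_(y : bvec n) F (ext y c).
Proof.
rewrite (reindex (fun p : bvec n * bool => ext p.1 p.2)) /=; last first.
  exists (fun x => (restr x, x ord_max)) => [[y c] _|x _] /=.
    by rewrite restr_ext ext_max.
  by rewrite ext_restr.
rewrite exchange_big /= pair_big /=; by [].
Qed.

Lemma chi_ext (R : realType) n (y a : bvec n) c d :
  chi R (ext y c) (ext a d) = chi R y a * (-1) ^+ (c && d).
Proof. by rewrite !chiE big_ord_recr /= !ext_max; under eq_bigr do rewrite !ext_widen. Qed.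

Lemma wt_ext n (a : bvec n) d : wt (ext a d) = (wt a + d)%N.
Proof. by rewrite !wtE big_ord_recr /= ext_max; under eq_bigr do rewrite ext_widen. Qed.

Definition bcompl n (y : bvec n) : bvec n := [ffun i => ~~ y i].

Lemma bcomplK n : involutive (@bcompl n).
Proof. by move=> y; apply/ffunP => i; rewrite !ffunE negbK. Qed.

Lemma chi_compl (R : realType) n (y a : bvec n) :
  chi R (bcompl y) a = chi R y a * (-1) ^+ odd (wt a).
Proof.
rewrite signr_odd wtE !chiE.
rewrite (big_morph (fun m : nat => (-1 : R) ^+ m) (@exprD _ _) (expr0 _)) -big_split /=.
apply: eq_bigr => i _; rewrite ffunE.
by case: (y i); case: (a i) => /=; rewrite ?expr0 ?expr1 ?mulr1 ?mul1r ?mulrNN ?mulr1.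
Qed.

Lemma gb_ext n (g : bvec n -> bool) b y c :
  gb g b (ext y c) = if c then b (+) g (bcompl y) else g y.
Proof.
rewrite /gb ext_max.
have -> : [ffun i => ext y c (widen_ord (leqnSn n) i)] = y.
  by apply/ffunP => i; rewrite ffunE ext_widen.
by case: c => /=; rewrite ?addbF.
Qed.

Lemma walsh_gb (R : realType) n (g : bvec n -> bool) b a d :
  walsh R (gb g b) (ext a d) =
  if d == b (+) odd (wt a) then walsh R g a else 0.
Proof.
rewrite !walshE sum_ext big_bool /=.
set S := \sum_y (-1) ^+ g y * chi R y a.
have E1 : \sum_y (-1) ^+ gb g b (ext y true) * chi R (ext y true) (ext a d)
        = (-1) ^+ b * (-1) ^+ d * (-1) ^+ odd (wt a) * S.
  rewrite /S big_distrr /= (reindex_inj (can_inj (@bcomplK n))) /=.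
  apply: eq_bigr => y _; rewrite gb_ext bcomplK chi_ext chi_compl signr_addb /=.
  ring.
have E0 : \sum_y (-1) ^+ gb g b (ext y false) * chi R (ext y false) (ext a d) = S.
  by apply: eq_bigr => y _; rewrite gb_ext chi_ext /= expr0 mulr1.
rewrite E1 E0 exprS.
have H2 := two_exp_neq0 R n.
clear E1 E0; case: b; case: d; case: (odd (wt a)) => /=; rewrite ?expr0 ?expr1 ?mulr0 ?mul0r; field; exact: H2.
Qed.

Lemma Inf_gb (R : realType) n (g : bvec n -> bool) b :
  Inf R (gb g b) = Inf R g + epsb R g b.
Proof.
rewrite !Inf_walsh /epsb (big_mkcond (fun a => odd (wt a) != b)) -big_split /= sum_ext exchange_big /=.
apply: eq_bigr => a _; rewrite big_bool /= !walsh_gb !wt_ext.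
case: b; case: (odd (wt a)) => /=; rewrite ?addn0 ?addn1 ?expr0n /= ?mulr0 ?addr0 ?add0r;
  rewrite ?natrD //; ring.
Qed.


Lemma div_lt k l (p : 'I_(k * l)) : (p %/ l < k)%N.
Proof.
have lp : (0 < l)%N by case: l p => [|l] [] //=; rewrite muln0.
by rewrite ltn_divLR // ltn_ord.
Qed.

Lemma mod_lt k l (p : 'I_(k * l)) : (p %% l < l)%N.
Proof.
have lp : (0 < l)%N by case: l p => [|l] [] //=; rewrite muln0.
by rewrite ltn_pmod.
Qed.

Definition bi k l (p : 'I_(k * l)) : 'I_k := Ordinal (div_lt p).
Definition bj k l (p : 'I_(k * l)) : 'I_l := Ordinal (mod_lt p).

Lemma blk_split k l (p : 'I_(k * l)) : blk (bi p) (bj p) = p.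
Proof. by apply: val_inj => /=; rewrite -divn_eq. Qed.

Lemma bi_blk k l (i : 'I_k) (j : 'I_l) : bi (blk i j) = i.
Proof.
apply: val_inj => /=; have jl := ltn_ord j.
by rewrite divnMDl ?divn_small ?addn0 //; apply: leq_ltn_trans jl.
Qed.

Lemma bj_blk k l (i : 'I_k) (j : 'I_l) : bj (blk i j) = j.
Proof. by apply: val_inj => /=; rewrite modnMDl modn_small. Qed.

Lemma big_blk (T : Type) (idx : T) (op : Monoid.com_law idx) k l (F : 'I_(k * l) -> T) :
  \big[op/idx]_p F p = \big[op/idx]_(i < k) \big[op/idx]_(j < l) F (blk i j).
Proof.
rewrite pair_big /= (reindex (fun q : 'I_k * 'I_l => blk q.1 q.2)) //.
exists (fun p => (bi p, bj p)) => [[i j] _|p _] /=.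
  by rewrite bi_blk bj_blk.
by rewrite blk_split.
Qed.

Definition blocks k l (x : bvec (k * l)) : {ffun 'I_k -> bvec l} :=
  [ffun i => [ffun j => x (blk i j)]].
Definition unblocks k l (X : {ffun 'I_k -> bvec l}) : bvec (k * l) :=
  [ffun p => X (bi p) (bj p)].

Lemma blocksK k l : cancel (@blocks k l) (@unblocks k l).
Proof. by move=> x; apply/ffunP => p; rewrite !ffunE blk_split. Qed.

Lemma unblocksK k l : cancel (@unblocks k l) (@blocks k l).
Proof. by move=> X; apply/ffunP => i; apply/ffunP => j; rewrite !ffunE bi_blk bj_blk. Qed.

Lemma sum_blocks (R : realType) k l (F : bvec (k * l) -> R) :
  \sum_x F x = \sum_(X : {ffun 'I_k -> bvec l}) F (unblocks X).
Proof.
rewrite (reindex (@unblocks k l)) //.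
by exists (@blocks k l) => x _; rewrite ?blocksK ?unblocksK.
Qed.

Lemma unblocksE k l (X : {ffun 'I_k -> bvec l}) i j : unblocks X (blk i j) = X i j.
Proof. by rewrite ffunE bi_blk bj_blk. Qed.

Lemma chi_unblocks (R : realType) k l (X A : {ffun 'I_k -> bvec l}) :
  chi R (unblocks X) (unblocks A) = \prod_i chi R (X i) (A i).
Proof.
rewrite chiE big_blk; apply: eq_bigr => i _; rewrite chiE.
by apply: eq_bigr => j _; rewrite !unblocksE.
Qed.

Lemma wt_unblocks k l (A : {ffun 'I_k -> bvec l}) :
  wt (unblocks A) = (\sum_i wt (A i))%N.
Proof.
rewrite wtE big_blk; apply: eq_bigr => i _; rewrite wtE.
by apply: eq_bigr => j _; rewrite !unblocksE.
Qed.

Lemma dcomp_unblocks k l (f : bvec k -> bool) (h : bvec l -> bool) X :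
  bool_dcomp f h (unblocks X) = f [ffun i => h (X i)].
Proof.
rewrite /bool_dcomp; congr f; apply/ffunP => i; rewrite !ffunE; congr h.
by apply/ffunP => j; rewrite ffunE unblocksE.
Qed.

Definition psi (R : realType) l (h : bvec l -> bool) (c : bool) (t : bvec l) : R :=
  if c then walsh R h t else (t == bz l)%:R.

Lemma sum_psi (R : realType) l (h : bvec l -> bool) c (a : bvec l) :
  \sum_t (-1) ^+ (h t && c) * chi R t a = 2 ^+ l * psi R h c a.
Proof.
rewrite /psi; case: c.
  rewrite walshE mulrA mulfV ?two_exp_neq0 // mul1r.
  by apply: eq_bigr => t _; rewrite andbT.
under eq_bigr do rewrite andbF expr0 mul1r.
by rewrite sum_chi; case: eqP; rewrite ?mulr1 ?mulr0.
Qed.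

Lemma walsh_comp_sum (R : realType) k l (f : bvec k -> bool) (h : bvec l -> bool) A :
  walsh R (bool_dcomp f h) (unblocks A) =
  \sum_w walsh R f w * \prod_i psi R h (w i) (A i).
Proof.
have E : forall X : {ffun 'I_k -> bvec l},
    (-1) ^+ f [ffun i => h (X i)] * chi R (unblocks X) (unblocks A) =
    \sum_w walsh R f w * \prod_i ((-1) ^+ (h (X i) && w i) * chi R (X i) (A i)).
  move=> X; rewrite -walsh_inv mulr_suml chi_unblocks; apply: eq_bigr => w _.
  rewrite chiE -mulrA -big_split /=; congr (_ * _); apply: eq_bigr => i _.
  by rewrite ffunE.
rewrite walshE sum_blocks.
under eq_bigr do rewrite dcomp_unblocks E.
rewrite exchange_big /= big_distrr /=; apply: eq_bigr => w _.
rewrite -big_distrr /= -(bigA_distr_bigA (fun i (t : bvec l) => (-1) ^+ (h t && w i) * chi R t (A i))) /=.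
under eq_bigr => i _ do rewrite sum_psi.
rewrite big_split /= prodr_const card_ord -exprM mulnC mulrCA mulrA.
by rewrite mulrA mulfVK ?two_exp_neq0.
Qed.

Definition pat k l (A : {ffun 'I_k -> bvec l}) : bvec k := [ffun i => A i != bz l].

Lemma prod_psi0 (R : realType) k l (h : bvec l -> bool) (A : {ffun 'I_k -> bvec l}) w :
  balanced h -> w != pat A -> \prod_i psi R h (w i) (A i) = 0.
Proof.
move=> bal ne.
have [i wi] : exists i, w i != pat A i.
  apply/existsP; apply: contraNT ne; rewrite negb_exists => /forallP H.
  by apply/eqP/ffunP => i; have := H i; rewrite negbK => /eqP.
rewrite (bigD1 i) //= /psi; move: wi; rewrite ffunE.
case: (w i) => /=.
  by rewrite negbK => /eqP ->; rewrite walsh_bz // mul0r.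
move=> H; have -> : (A i == bz l) = false by move: H; case: (A i == bz l).
by rewrite /= mulr0n mul0r.
Qed.

Lemma walsh_comp (R : realType) k l (f : bvec k -> bool) (h : bvec l -> bool) A :
  balanced h ->
  walsh R (bool_dcomp f h) (unblocks A) =
  walsh R f (pat A) * \prod_i psi R h (pat A i) (A i).
Proof.
move=> bal; rewrite walsh_comp_sum (bigD1 (pat A)) //= [X in _ + X]big1 ?addr0 //.
by move=> w ne; rewrite prod_psi0 ?mulr0.
Qed.

Lemma walsh_comp_sq (R : realType) k l (f : bvec k -> bool) (h : bvec l -> bool) A :
  balanced h ->
  walsh R (bool_dcomp f h) (unblocks A) ^+ 2 =
  \sum_w walsh R f w ^+ 2 * \prod_i psi R h (w i) (A i) ^+ 2.
Proof.
move=> bal; rewrite walsh_comp // (bigD1 (pat A)) //= [X in _ + X]big1 ?addr0.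
  by rewrite exprMn prodrXl.
by move=> w ne; rewrite prodrXl prod_psi0 ?expr0n ?mulr0.
Qed.

Lemma wt_bz n : wt (bz n) = 0%N.
Proof. by rewrite wtE big1 // => i _; rewrite ffunE. Qed.

Lemma sum_psi2 (R : realType) l (h : bvec l -> bool) c :
  \sum_t psi R h c t ^+ 2 = 1.
Proof.
case: c; first exact: parseval.
rewrite /psi (bigD1 (bz l)) //= eqxx [X in _ + X]big1 ?addr0 ?expr1n //.
by move=> t /negbTE ->; rewrite expr0n.
Qed.

Lemma sum_wt_psi2 (R : realType) l (h : bvec l -> bool) c :
  \sum_t (wt t)%:R * psi R h c t ^+ 2 = (c : nat)%:R * Inf R h.
Proof.
case: c; first by rewrite Inf_walsh mul1r.
rewrite /psi (bigD1 (bz l)) //= wt_bz [X in _ + X]big1 ?mul0r ?addr0 //.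
by move=> t /negbTE ->; rewrite expr0n mulr0.
Qed.

Lemma Inf_comp_aux (R : realType) k l (h : bvec l -> bool) (w : bvec k) :
  \sum_(A : {ffun 'I_k -> bvec l}) (\sum_i wt (A i))%N%:R * \prod_i psi R h (w i) (A i) ^+ 2
  = (wt w)%:R * Inf R h.
Proof.
transitivity (\sum_(A : {ffun 'I_k -> bvec l}) \sum_j \prod_i
    ((if i == j then (wt (A i))%:R else 1) * psi R h (w i) (A i) ^+ 2)).
  apply: eq_bigr => A _; rewrite natr_sum mulr_suml; apply: eq_bigr => j _.
  rewrite [RHS]big_split /=; congr (_ * _).
  by rewrite (bigD1 j) //= eqxx big1 ?mulr1 // => i /negbTE ->.
rewrite exchange_big /= wtE natr_sum mulr_suml; apply: eq_bigr => j _.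
rewrite -(bigA_distr_bigA (fun i (t : bvec l) =>
   (if i == j then (wt t)%:R else 1) * psi R h (w i) t ^+ 2)) /=.
rewrite (bigD1 j) //= [X in _ * X]big1 ?mulr1.
  by under eq_bigr do rewrite eqxx; rewrite sum_wt_psi2.
by move=> i /negbTE ij; under eq_bigr do rewrite ij mul1r; rewrite sum_psi2.
Qed.

Lemma Inf_comp (R : realType) k l (f : bvec k -> bool) (h : bvec l -> bool) :
  balanced h -> Inf R (bool_dcomp f h) = Inf R f * Inf R h.
Proof.
move=> bal; rewrite !Inf_walsh sum_blocks.
under eq_bigr do rewrite walsh_comp_sq // wt_unblocks big_distrr /=.
rewrite exchange_big /= mulr_suml; apply: eq_bigr => w _.
under eq_bigr do rewrite mulrCA.
by rewrite -big_distrr /= Inf_comp_aux Inf_walsh mulrCA mulrA.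
Qed.


Lemma min_char (R : realType) (I : finType) (P : pred I) (F : I -> R) m :
  (exists i, P i /\ F i = m) -> (forall i, P i -> m <= F i) ->
  fine (\big[Order.min/+oo%E]_(i | P i) (F i)%:E) = m.
Proof.
move=> [i [Pi Fi]] H.
suff -> : \big[Order.min/+oo%E]_(i | P i) (F i)%:E = m%:E by [].
apply/le_anti/andP; split.
  by rewrite (bigD1 i) //= ge_min Fi lexx.
elim/big_ind: _ => //; first by rewrite leey.
by move=> x y Hx Hy; rewrite le_min Hx Hy.
Qed.

Lemma ex_min (R : realType) (I : finType) (P : pred I) (F : I -> R) :
  (exists i, P i) -> exists i, P i /\ forall j, P j -> F i <= F j.
Proof.
move=> [i0 Pi0]; case: (arg_minP F Pi0) => i Pi H.
by exists i; split.
Qed.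

Lemma bigmax_ub (R : realType) (I : finType) (P : pred I) (F : I -> R) i :
  P i -> F i <= \big[Num.max/0]_(j | P j) F j.
Proof. by move=> Pi; rewrite (bigD1 i) //= le_max lexx. Qed.

Lemma bigmax_ex (R : realType) (I : finType) (P : pred I) (F : I -> R) :
  0 < \big[Num.max/0]_(j | P j) F j ->
  exists i, P i /\ F i = \big[Num.max/0]_(j | P j) F j.
Proof.
have : \big[Num.max/0]_(j | P j) F j = 0 \/
       exists i, P i /\ F i = \big[Num.max/0]_(j | P j) F j.
  set B := \big[Num.max/0]_(j | P j) F j.
  have : B = 0 \/ exists i, P i /\ F i = B.
    rewrite /B; elim/big_ind: _.
    - by left.
    - move=> x y Hx Hy; rewrite maxEle; case: ifP => _; [exact: Hy| exact: Hx].
    - by move=> i Pi; right; exists i.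
  by [].
by case=> [->|//]; rewrite ltxx.
Qed.

Definition log2R (R : realType) := @log2 R.

Lemma log2M (R : realType) (x y : R) : 0 < x -> 0 < y ->
  log2 (x * y) = log2 x + log2 y.
Proof. by move=> x0 y0; rewrite /log2 lnM ?posrE // mulrDl. Qed.

Lemma log2V (R : realType) (x : R) : 0 < x -> log2 x^-1 = - log2 x.
Proof. by move=> x0; rewrite /log2 lnV ?posrE // mulNr. Qed.

Lemma log2_le (R : realType) (x y : R) : 0 < x -> 0 < y ->
  (log2 x <= log2 y) = (x <= y).
Proof.
move=> x0 y0; have l2 : 0 < (ln (2:R))^-1 by rewrite invr_gt0; apply: ln_gt0; rewrite ltr1n.
by rewrite /log2 ler_pM2r // ler_ln ?posrE.
Qed.

Lemma log2_ge0 (R : realType) (x : R) : 1 <= x -> 0 <= log2 x.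
Proof.
move=> x1; rewrite /log2 divr_ge0 //; first exact: ln_ge0.
by apply/ltW/ln_gt0; rewrite ltr1n.
Qed.

Lemma log2_prod (R : realType) (I : finType) (x : I -> R) :
  (forall i, 0 < x i) -> log2 (\prod_i x i) = \sum_i log2 (x i).
Proof.
move=> xp.
suff : 0 < \prod_i x i /\ log2 (\prod_i x i) = \sum_i log2 (x i) by case.
elim/big_rec2: _.
  by split; rewrite ?ltr01 // /log2 ln1 mul0r.
move=> i y1 y2 _ [y0 <-]; split; first by rewrite mulr_gt0.
by rewrite log2M.
Qed.


Lemma sq_pos (R : realType) (x : R) : x ^+ 2 != 0 -> 0 < x ^+ 2.
Proof. by move=> nz; rewrite lt0r nz sqr_ge0. Qed.

Lemma walsh_ex (R : realType) n (f : bvec n -> bool) :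
  exists a, walsh R f a ^+ 2 != 0.
Proof.
apply/existsP; apply: contraT; rewrite negb_exists => /forallP H.
have := parseval R f; rewrite big1 => [/eqP|a _].
  by rewrite eq_sym oner_eq0.
by move: (H a); rewrite negbK => /eqP.
Qed.

Definition nl (R : realType) (x : R) := log2 x^-1.

Lemma nlM (R : realType) (x y : R) : 0 < x -> 0 < y -> nl (x * y) = nl x + nl y.
Proof. by move=> x0 y0; rewrite /nl invfM log2M // invr_gt0. Qed.

Lemma nl1 (R : realType) : nl (1 : R) = 0.
Proof. by rewrite /nl invr1 /log2 ln1 mul0r. Qed.

Lemma nl_prod (R : realType) (I : finType) (x : I -> R) :
  (forall i, 0 < x i) -> nl (\prod_i x i) = \sum_i nl (x i).
Proof.
move=> xp; rewrite /nl -prodfV log2_prod //.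
by move=> i; rewrite invr_gt0.
Qed.

Lemma nl_le (R : realType) (x y : R) : 0 < x -> 0 < y -> (nl x <= nl y) = (y <= x).
Proof. by move=> x0 y0; rewrite /nl log2_le ?invr_gt0 // lef_pV2 ?posrE. Qed.

Lemma Hmin_spec (R : realType) n (f : bvec n -> bool) :
  exists a0, walsh R f a0 ^+ 2 != 0 /\ Hmin R f = nl (walsh R f a0 ^+ 2) /\
  forall a, walsh R f a ^+ 2 != 0 -> Hmin R f <= nl (walsh R f a ^+ 2).
Proof.
have [a0 [Pa0 Ha0]] := ex_min (fun a => nl (walsh R f a ^+ 2)) (walsh_ex R f).
have E : Hmin R f = nl (walsh R f a0 ^+ 2).
  by apply: min_char => //; exists a0.
by exists a0; split => //; split => // a Pa; rewrite E; apply: Ha0.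
Qed.

Lemma wt_le n (w : bvec n) : (wt w <= n)%N.
Proof. by rewrite /wt (leq_trans (max_card _)) // card_ord. Qed.

Lemma pat_psi (R : realType) l (h : bvec l -> bool) k (A : {ffun 'I_k -> bvec l}) i :
  psi R h (pat A i) (A i) = if A i == bz l then 1 else walsh R h (A i).
Proof. by rewrite /psi ffunE; case: eqP => //= ->; rewrite eqxx. Qed.

Lemma Hmin_comp (R : realType) n (g : bvec n -> bool) b : balanced g ->
  Hmin R (bool_dcomp (gb g b) g) =
  fine (\big[Order.min/+oo%E]_(i < n.+2 | 0 < acoef R g b i)
             (- log2 (acoef R g b i) + i%:R * Hmin R g)%:E).
Proof.
move=> bal.
set H := Hmin R g.
pose m (i : 'I_n.+2) := - log2 (acoef R g b i) + i%:R * H.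
have [be [Wbe [Hbe Hbemin]]] := Hmin_spec R g.
have wtle : forall w : bvec n.+1, (wt w < n.+2)%N by move=> w; rewrite ltnS wt_le.
have a_ge : forall w : bvec n.+1,
    walsh R (gb g b) w ^+ 2 <= acoef R g b (Ordinal (wtle w)).
  by move=> w; rewrite /acoef; apply: bigmax_ub.
have Pex : exists i : 'I_n.+2, 0 < acoef R g b i.
  have [w Hw] := walsh_ex R (gb g b).
  by exists (Ordinal (wtle w)); apply: lt_le_trans (a_ge w); apply: sq_pos.
have [i0 [Pi0 i0min]] := ex_min m Pex.
have -> : fine (\big[Order.min/+oo%E]_(i < n.+2 | 0 < acoef R g b i)
             (- log2 (acoef R g b i) + i%:R * H)%:E) = m i0.
  by apply: min_char => //; exists i0.
have bene : be != bz n.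
  by apply: contraNneq Wbe => ->; rewrite walsh_bz // expr0n.
have sumH : forall w : bvec n.+1,
    \sum_i (if w i then H else 0) = (wt w)%:R * H.
  move=> w; rewrite wtE natr_sum mulr_suml; apply: eq_bigr => i _.
  by case: (w i); rewrite ?mul1r ?mul0r.
apply: min_char.
  have [w0 [/eqP wtw0 Ew0]] := bigmax_ex Pi0.
  pose A : {ffun 'I_n.+1 -> bvec n} := [ffun i => if w0 i then be else bz n].
  have patA : pat A = w0.
    apply/ffunP => i; rewrite !ffunE; case: (w0 i) => //=.
    by rewrite eqxx.
  have WG : walsh R (bool_dcomp (gb g b) g) (unblocks A) ^+ 2 =
      acoef R g b i0 * \prod_i (if w0 i then walsh R g be ^+ 2 else 1).
    rewrite walsh_comp // exprMn patA Ew0 -prodrXl; congr (_ * _).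
    apply: eq_bigr => i _; rewrite /psi ffunE.
    by case: (w0 i); rewrite ?eqxx ?expr1n.
  have prpos : forall i, 0 < (if w0 i then walsh R g be ^+ 2 else 1 : R).
    by move=> i; case: (w0 i); rewrite ?ltr01 ?sq_pos.
  have pp : 0 < \prod_i (if w0 i then walsh R g be ^+ 2 else 1 : R).
    by apply: prodr_gt0 => i _; apply: prpos.
  exists (unblocks A); split.
    by rewrite WG mulf_neq0 // gt_eqF.
  change (nl (walsh R (bool_dcomp (gb g b) g) (unblocks A) ^+ 2) = m i0).
  rewrite WG nlM // nl_prod // /m /nl log2V //.
  congr (_ + _); rewrite -wtw0 -sumH; apply: eq_bigr => i _.
  by case: (w0 i); rewrite /H ?Hbe // invr1 /log2 ln1 mul0r.
move=> al; rewrite -(blocksK al); set A := blocks al; clearbody A => nz.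
have nz' := nz; rewrite walsh_comp // exprMn -prodrXl in nz'.
move: nz'; rewrite mulf_eq0 negb_or => /andP [nzf nzp].
have nzi : forall i, psi R g (pat A i) (A i) ^+ 2 != 0.
  by move=> i; move: nzp; rewrite prodf_seq_neq0 => /allP /(_ i); apply; rewrite mem_index_enum.
change (m i0 <= nl (walsh R (bool_dcomp (gb g b) g) (unblocks A) ^+ 2)).
rewrite walsh_comp // exprMn -prodrXl nlM ?sq_pos ?prodr_gt0 // ?nl_prod //; last first.
  by move=> i _; apply: sq_pos.
  by move=> i; apply: sq_pos.
set j := Ordinal (wtle (pat A)).
have Pj : 0 < acoef R g b j by apply: lt_le_trans (a_ge _); apply: sq_pos.
apply: (le_trans (i0min j Pj)); rewrite /m; apply: lerD.
  by rewrite -log2V // -/(nl _) nl_le ?sq_pos // a_ge.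
rewrite -sumH; apply: ler_sum => i _.
move: (nzi i); rewrite pat_psi ffunE.
case: (A i == bz n) => /= [_|nzw]; first by rewrite expr1n nl1.
by apply: Hbemin.
Qed.

Unset Implicit Arguments. Set Strict Implicit.

Lemma plateau_min (R : realType) (n : nat) (g : bvec n -> bool) (b : bool) (t : nat) :
  balanced g -> (t < n)%N -> odd t = b ->
  plateaued R g -> resilient R g t -> ~ resilient R g t.+1 ->
  fine (\big[Order.min/+oo%E]_(i < n.+2 | 0 < acoef R g b i)
             (- log2 (acoef R g b i) + i%:R * Hmin R g)%:E) = (t + 3)%:R * Hmin R g.
Proof.
move=> bal tn tb [c pc] res nres.
have sqc : forall a, walsh R g a ^+ 2 != 0 -> walsh R g a ^+ 2 = c ^+ 2.
  move=> a; case: (pc a) => [->|[->|->]]; rewrite ?expr0n ?eqxx //= sqrrN //.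
have [be [Wbe [Hbe _]]] := Hmin_spec R g.
have c2p : 0 < c ^+ 2 by rewrite -(sqc be Wbe) sq_pos.
have HE : Hmin R g = nl (c ^+ 2) by rewrite Hbe sqc.
have c2le : c ^+ 2 <= 1.
  rewrite -(sqc be Wbe) -(parseval R g) (bigD1 be) //= lerDl.
  by apply: sumr_ge0 => a _; apply: sqr_ge0.
have H0 : 0 <= Hmin R g by rewrite HE /nl log2_ge0 // invf_ge1.
have [a0 [wa0 Wa0]] : exists a, (wt a <= t.+1)%N /\ walsh R g a != 0.
  have : [exists a, (wt a <= t.+1)%N && (walsh R g a != 0)].
    apply: contraT; rewrite negb_exists => /forallP H; exfalso; apply: nres.
    move=> a wa; move: (H a); rewrite wa /= negbK => /eqP //.
  by case/existsP => a /andP [H1 H2]; exists a.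
have wt0 : wt a0 = t.+1.
  apply/eqP; rewrite eqn_leq wa0 /=; rewrite ltnNge; apply/negP => wl.
  by move: Wa0; rewrite res // eqxx.
have t2 : (t.+2 < n.+2)%N by rewrite !ltnS.
pose i1 : 'I_n.+2 := Ordinal t2.
have Wa0' : walsh R g a0 ^+ 2 != 0 by rewrite expf_neq0.
have gbval : walsh R (gb g b) (ext a0 true) = walsh R g a0.
  by rewrite walsh_gb wt0 /= -tb; case: (odd t).
have acoef_pos : forall i : 'I_n.+2, 0 < acoef R g b i ->
    acoef R g b i = c ^+ 2 /\ (t.+2 <= i)%N.
  move=> i ai; have [w [/eqP wi Ew]] := bigmax_ex ai.
  change (walsh R (gb g b) w ^+ 2 = acoef R g b i) in Ew.
  rewrite -(ext_restr w) walsh_gb wt_ext in Ew wi.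
  move: Ew; case: eqP => [hd|_] Ew; last by move: ai; rewrite -Ew expr0n ltxx.
  have nzw : walsh R g (restr w) ^+ 2 != 0 by rewrite Ew gt_eqF.
  split; first by rewrite -Ew sqc.
  have : (t.+1 <= wt (restr w))%N.
    rewrite ltnNge; apply/negP => wl; move: nzw; rewrite res // expr0n eqxx //.
  move=> H1; rewrite -wi; move: H1; rewrite leq_eqVlt => /orP [/eqP we|H]; last first.
    by apply: leq_trans (leq_addr _ _).
  by rewrite hd -we /= -tb; case: (odd t); rewrite /= addn1.
have ai1 : 0 < acoef R g b i1.
  have := @bigmax_ub R (bvec n.+1) (fun w : bvec n.+1 => wt w == i1)
     (fun w => walsh R (gb g b) w ^+ 2) (ext a0 true).
  rewrite wt_ext wt0 addn1 eqxx => /(_ isT) /=; rewrite gbval; apply: lt_le_trans.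
  exact: sq_pos.
apply: min_char.
  exists i1; split => //; have [-> _] := acoef_pos i1 ai1.
  rewrite -log2V // -/(nl _) -HE /= -addn1 natrD.
  have -> : (t + 3 = t.+2 + 1)%N by rewrite addn1 addnS addn2.
  by rewrite natrD; ring.
move=> i ai; have [-> ti] := acoef_pos i ai.
rewrite -log2V // -/(nl _) -HE.
have -> : (t + 3 = t.+2 + 1)%N by rewrite addn1 addnS addn2.
rewrite natrD mulrDl mul1r addrC lerD2l ler_wpM2r // ler_nat //.
Qed.

Theorem theorem6 (R : realType) (n : nat) (g : bvec n -> bool) (b : bool) :
  balanced g ->
  let Gb := bool_dcomp (gb g b) g in
  (Hmin R Gb / Inf R Gb =
     fine (\big[Order.min/+oo%E]_(i < n.+2 | 0 < acoef R g b i)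
             (- log2 (acoef R g b i) + i%:R * Hmin R g)%:E)
     / (Inf R g * (Inf R g + epsb R g b)))
  /\
  (forall t : nat, (t < n)%N -> odd t = b ->
     plateaued R g -> resilient R g t -> ~ resilient R g t.+1 ->
     Hmin R Gb / Inf R Gb =
       Hmin R g / Inf R g * ((t + 3)%:R / (Inf R g + epsb R g b))).
Proof.
move=> bal Gb.
have InfG : Inf R Gb = Inf R g * (Inf R g + epsb R g b).
  by rewrite /Gb Inf_comp // Inf_gb mulrC.
have P1 : Hmin R Gb / Inf R Gb =
     fine (\big[Order.min/+oo%E]_(i < n.+2 | 0 < acoef R g b i)
             (- log2 (acoef R g b i) + i%:R * Hmin R g)%:E)
     / (Inf R g * (Inf R g + epsb R g b)).
  by rewrite InfG /Gb Hmin_comp.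
split => // t tn tb pl res nres.
rewrite P1 (plateau_min R n g b t bal tn tb pl res nres) invfM.
ring.
Qed.
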